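(* Let $0\le r\le R$ be integers, assume $\mu<\infty$, $\mu p\neq 1$ and $\mu p q\neq 1$, and consider the model on the truncated tree $\mathbb{T}_R$ with the information starting at the vertex $x$ at distance $r$ from the root. Then $$ E_r (S) = \frac{1}{1 - \mu p} \bigg(1 + q \,\frac{1 - q^r}{1 - q} \, (1 - p) - (\mu p)^{R - r + 1} \,\frac{1 - pq (1 + (\mu - 1)(\mu pq)^r)}{1 - \mu pq} \bigg). $$
   Context: Let $(p_k)_{k\ge 0}$ be an offspring distribution with $p_0=0$, mean $\mu=\sum_k kp_k$ and variance $\sigma^2=\sum_k (k-\mu)^2p_k$. Let $\mathbb{T}$ be a Galton–Watson tree with root $0$ and offspring distribution $(p_k)$ (each vertex independently has $k$ offspring, i.e. edges going away from the root, with probability $p_k$). For an integer $R\ge 0$, the truncated tree $\mathbb{T}_R$ is the subgraph of $\mathbb{T}$ induced by the vertices at distance at most $R$ from the root. Fix $p,q\in(0,1)$. Each edge of the tree is replaced by two arrows: the arrow parent $\to$ offspring is open with probability $p$ and the arrow offspring $\to$ parent is open with probability $q$, all arrows independently of each other and of the tree. The source of the information is a vertex $x$ at distance $r$ from the root chosen independently of the offspring numbers of its ancestors and of the percolation (e.g. the vertex obtained from the root by always moving to the first offspring); let $0=x_0\to x_1\to\cdots\to x_r=x$ be the path from the root to $x$. The cluster is $\mathscr{C}=\{y: \text{there is a directed open path from } x \text{ to } y\}$ (including $x$), its elements are called wet, and $S=\operatorname{card}(\mathscr{C})$. $E_r$ and $P_r$ denote expectation and probability (over both the tree and the percolation) when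 the source is at distance $r$ from the root. *)

(* Defs.v *)
From HB Require Import structures.
From mathcomp Require Import all_boot all_order all_algebra.
From mathcomp Require Import all_classical all_reals all_analysis.
From Stdlib Require Import Relations.

Set Implicit Arguments.
Unset Strict Implicit.
Unset Printing Implicit Defensive.
Import Order.TTheory GRing.Theory Num.Theory.
Local Open Scope ring_scope.
Local Open Scope classical_set_scope.

(* A finite rooted plane tree whose edges carry the states of the two
   arrows: each child is given as ((down, up), subtree) where
   [down] = arrow parent -> offspring is open, [up] = arrow
   offspring -> parent is open. *)
Inductive ptree := PNode of seq (bool * bool * ptree).

Definition children (t : ptree) := let: PNode cs := t in cs.

Fixpoint enc (t : ptree) : GenTree.tree (bool * bool) :=
  let: PNode cs := t in
  GenTree.Node 0 (map (fun c => GenTree.Node 1 [:: GenTree.Leaf c.1; enc c.2]) cs).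

Fixpoint dec (g : GenTree.tree (bool * bool)) : ptree :=
  match g with
  | GenTree.Leaf _ => PNode [::]
  | GenTree.Node _ gs =>
      PNode (pmap (fun g' => match g' with
                  | GenTree.Node _ [:: GenTree.Leaf ab; g''] => Some (ab, dec g'')
                  | _ => None end) gs)
  end.

Lemma encK' : forall t, dec (enc t) = t.
Proof.
fix IH 1; case=> cs /=; congr PNode.
elim: cs => [|[ab c] cs IHcs] //=.
by rewrite IH IHcs.
Qed.

Lemma encK : cancel enc dec.
Proof. exact: encK'. Qed.

HB.instance Definition _ := Countable.copy ptree (can_type encK).

Section Model.
Variables (R : realType) (pk : nat -> R) (p q : R).

Definition ew (ab : bool * bool) : R :=
  (if ab.1 then p else 1 - p) * (if ab.2 then q else 1 - q).

(* [wt d t]: probability that the (percolated) Galton--Watson tree truncated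
   at depth d (i.e. T_d with all arrow states) equals t. *)
Fixpoint wt (d : nat) (t : ptree) {struct t} : R :=
  let: PNode cs := t in
  match d with
  | 0 => (size cs == 0%N)%:R
  | d'.+1 => pk (size cs) * foldr (fun c acc => ew c.1 * wt d' c.2 * acc) 1 cs
  end.

End Model.

(* Vertices are Ulam--Harris addresses: [::] is the root, rcons u i is the
   i-th offspring (0-indexed) of u. *)
Fixpoint sub (t : ptree) (u : seq nat) : option ptree :=
  match u with
  | [::] => Some t
  | i :: u' => if (i < size (children t))%N
               then sub (nth (PNode [::]) [seq c.2 | c <- children t] i) u'
               else None
  end.

Definition edge (t : ptree) (u : seq nat) (i : nat) : option (bool * bool) :=
  match sub t u with
  | Some (PNode cs) => if (i < size cs)%N then Some (nth (false, false) [seq c.1 | c <- cs] i)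
                       else None
  | None => None
  end.

Definition arrow (t : ptree) (x y : seq nat) : Prop :=
  exists u i ab, edge t u i = Some ab /\
    ((x = u /\ y = rcons u i /\ ab.1) \/ (x = rcons u i /\ y = u /\ ab.2)).

Definition cluster (t : ptree) (x : seq nat) : set (seq nat) :=
  [set y | clos_refl_trans _ (arrow t) x y].

Definition source (r : nat) : seq nat := nseq r 0%N.

Definition Ssize (R : realType) (t : ptree) (x : seq nat) : \bar R :=
  (\esum_(y in cluster t x) (1 : \bar R))%E.

Definition ES (R : realType) (pk : nat -> R) (p q : R) (Rt r : nat) : \bar R :=
  (\esum_(t in [set: ptree]) ((wt pk p q Rt t)%:E * Ssize R t (source r)))%E.

(* Main.v *)
Require Import Defs.
From HB Require Import structures.
From mathcomp Require Import all_boot all_order all_algebra.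
From mathcomp Require Import all_classical all_reals all_analysis.
From Stdlib Require Import Relations.
From mathcomp Require Import ring lra.
Import Order.TTheory GRing.Theory Num.Theory.
Set Implicit Arguments.
Unset Strict Implicit.
Unset Printing Implicit Defensive.

Definition def : bool * bool * ptree := (false, false, PNode [::]).
Definition chd (t : ptree) (i : nat) := nth def (children t) i.

Lemma sub_cons cs i u : sub (PNode cs) (i :: u) =
  if (i < size cs)%N then sub (nth def cs i).2 u else None.
Proof. by rewrite /=; case: ifP => // h; rewrite (nth_map def). Qed.

Lemma edge_nil cs j : edge (PNode cs) [::] j =
  if (j < size cs)%N then Some (nth def cs j).1 else None.
Proof. by rewrite /edge /=; case: ifP => // h; rewrite (nth_map def). Qed.

Lemma edge_cons cs i u j : edge (PNode cs) (i :: u) j =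
  if (i < size cs)%N then edge (nth def cs i).2 u j else None.
Proof. by rewrite /edge sub_cons; case: ifP. Qed.

Lemma arrowP cs x y : arrow (PNode cs) x y <->
  [\/ (x = [::] /\ exists2 j, y = [:: j] & ((j < size cs)%N && (nth def cs j).1.1)),
      (y = [::] /\ exists2 j, x = [:: j] & ((j < size cs)%N && (nth def cs j).1.2)) |
      exists i x' y', [/\ x = i :: x', y = i :: y', (i < size cs)%N &
                          arrow (nth def cs i).2 x' y']].
Proof.
split.
  move=> [u [i [ab [He Hor]]]]; case: u He Hor => [|k u] He Hor.
    rewrite edge_nil in He; case: ifP He => // hj [Hab].
    case: Hor => [[-> [-> h1]]|[-> [-> h2]]].
      by apply: Or31; split => //; exists i => //; rewrite hj Hab.
    by apply: Or32; split => //; exists i => //; rewrite hj Hab.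
  rewrite edge_cons in He; case: ifP He => // hk He.
  apply: Or33; case: Hor => [[-> [-> h1]]|[-> [-> h2]]].
    exists k, u, (rcons u i); split => //.
    by exists u, i, ab; split => //; left.
  exists k, (rcons u i), u; split => //.
  by exists u, i, ab; split => //; right.
case.
- move=> [-> [j -> /andP[hj hd]]].
  exists [::], j, (nth def cs j).1; rewrite edge_nil hj; split => //; by left.
- move=> [-> [j -> /andP[hj hd]]].
  exists [::], j, (nth def cs j).1; rewrite edge_nil hj; split => //; by right.
- move=> [i [x' [y' [-> -> hi [u [j [ab [He Hor]]]]]]]].
  exists (i :: u), j, ab; rewrite edge_cons hi; split => //.
  by case: Hor => [[-> [-> h]]|[-> [-> h]]]; [left|right].
Qed.

Definition reach t := clos_refl_trans (seq nat) (arrow t).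

Lemma reach_lift cs i x y : (i < size cs)%N -> reach (nth def cs i).2 x y ->
  reach (PNode cs) (i :: x) (i :: y).
Proof.
move=> hi; elim => [a b hab| a | a b c _ IH1 _ IH2].
- apply: rt_step; apply/arrowP; apply: Or33; by exists i, a, b.
- exact: rt_refl.
- exact: rt_trans IH1 IH2.
Qed.

Fixpoint Dn (t : ptree) (u : seq nat) : Prop :=
  match u with
  | [::] => True
  | i :: u' => [/\ (i < size (children t))%N, (chd t i).1.1 & Dn (chd t i).2 u']
  end.

Fixpoint Up (t : ptree) (r : nat) : bool :=
  if r is r'.+1 then (chd t 0).1.2 && Up (chd t 0).2 r' else true.

Fixpoint has0 (t : ptree) (r : nat) : bool :=
  if r is r'.+1 then (0 < size (children t))%N && has0 (chd t 0).2 r' else true.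

Fixpoint Cl (t : ptree) (r : nat) (u : seq nat) : Prop :=
  match r with
  | 0 => Dn t u
  | r'.+1 => match u with
    | [::] => Up (chd t 0).2 r' && (chd t 0).1.2
    | i :: u' => if i == 0%N then Cl (chd t 0).2 r' u'
                 else (Up (chd t 0).2 r' && (chd t 0).1.2) /\ Dn t (i :: u')
    end
  end.

Lemma Dn_reach t u : Dn t u -> reach t [::] u.
Proof.
elim: u t => [|i u IH] [cs] /=; first by move=> _; apply: rt_refl.
move=> [hi hd hD]; apply: (@rt_trans _ _ _ [:: i]).
  apply: rt_step; apply/arrowP; apply: Or31; split => //; exists i => //.
  by rewrite hi.
by apply: reach_lift => //; apply: IH.
Qed.

Lemma Dn_step t x y : Dn t x -> arrow t x y -> Dn t y.
Proof.
elim: x t y => [|i x IH] [cs] y hD /arrowP [].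
- by move=> [_ [j -> /andP[hj hd]]] /=.
- by move=> [-> _].
- by move=> [k [x' [y' [? _ _ _]]]].
- by move=> [].
- by move=> [-> _].
- move=> [k [x' [y' [[e1 e2] -> hk ha]]]]; subst k x'.
  by case: hD => /= h1 h2 h3; split => //; apply: IH ha.
Qed.

Lemma Dn_reach_closed t x y : reach t x y -> Dn t x -> Dn t y.
Proof.
elim => [a b hab|a|a b c _ IH1 _ IH2] //; first by move=> h; apply: Dn_step hab.
by move=> /IH1 /IH2.
Qed.

Lemma Up_Cl t r : Up t r -> Cl t r [::].
Proof. by case: r => //= r /andP[h1 h2]; rewrite h1 h2. Qed.

Lemma Cl_Up t r : Cl t r [::] -> Up t r.
Proof. by case: r => //= r /andP[h1 h2]; rewrite h1 h2. Qed.

Lemma Cl_src t r : Cl t r (nseq r 0%N).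
Proof. by elim: r t => [|r IH] t //=. Qed.

Lemma Cl_step t r x y : Cl t r x -> arrow t x y -> Cl t r y.
Proof.
elim: r t x y => [|r IH] [cs] x y; first by move=> /= h1 h2; apply: Dn_step h1 h2.
move=> hC /arrowP [].
- move=> [? [j -> /andP[hj hd]]]; subst x => /=.
  case: eqP => [ej|nej]; last by split => //; split.
  by subst j; apply: Up_Cl; case/andP: hC.
- move=> [-> [j ? /andP[hj hu]]]; subst x; move: hC => /=.
  case: eqP => [ej|nej]; last by case.
  by subst j => /Cl_Up ->; rewrite hu.
- move=> [k [x' [y' [? ? hk ha]]]]; subst x y; move: hC => /=.
  case: eqP => [ek|nek]; first by subst k; move=> h; apply: IH h ha.
  by move=> [hU [h1 h2 h3]]; split => //; split => //; apply: Dn_step h3 ha.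
Qed.

Lemma Up_reach t r : has0 t r -> Up t r -> reach t (nseq r 0%N) [::].
Proof.
elim: r t => [|r IH] [cs] /=; first by move=> _ _; apply: rt_refl.
move=> /andP[h0 hh] /andP[hu hU]; apply: (@rt_trans _ _ _ [:: 0%N]).
  by apply: reach_lift => //; apply: IH.
by apply: rt_step; apply/arrowP; apply: Or32; split => //; exists 0%N => //; rewrite h0.
Qed.

Lemma Cl_reach t r u : has0 t r -> Cl t r u -> reach t (nseq r 0%N) u.
Proof.
elim: r t u => [|r IH] [cs] u /=; first by move=> _; apply: Dn_reach.
move=> /andP[h0 hh]; case: u => [|i u].
  by move=> /andP[hU hu]; apply: (@Up_reach (PNode cs) r.+1); apply/andP; split.
case: eqP => [->|nei] hC; first by apply: reach_lift => //; apply: IH.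
case: hC => /andP[hU hu] hD; apply: (@rt_trans _ _ _ [::]).
  by apply: (@Up_reach (PNode cs) r.+1); apply/andP; split.
exact: Dn_reach.
Qed.

Lemma cluster_Cl t r : has0 t r -> Defs.cluster t (source r) = Cl t r.
Proof.
move=> h; apply/seteqP; split => y /=; last exact: Cl_reach.
move=> hr; have : Cl t r (source r) by apply: Cl_src.
elim: hr => [a b hab|a|a b c _ IH1 _ IH2] //; first by move=> hc; apply: Cl_step hab.
by move=> /IH1 /IH2.
Qed.

Section Count.
Variable R : realType.
Local Open Scope ring_scope.
Local Open Scope ereal_scope.
Local Open Scope classical_set_scope.

Lemma esum_addr (P : set (seq nat)) (a : seq nat -> \bar R) n :
  (forall y, 0 <= a y) -> (forall i u, P (i :: u) -> (i < n)%N) ->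
  \esum_(y in P) a y = \esum_(y in P `&` [set [::]]) a y +
     \sum_(0 <= i < n) \esum_(u in [set u | P (i :: u)]) a (i :: u).
Proof.
move=> a0 hn.
have H m : \esum_(y in P `&` [set y | exists i u, y = i :: u /\ (i < m)%N]) a y =
    \sum_(0 <= i < m) \esum_(u in [set u | P (i :: u)]) a (i :: u).
  elim: m => [|m IH].
    by rewrite big_geq //; apply: esum1 => y [_ [i [u [_ //]]]].
  rewrite big_nat_recr //= -IH.
  rewrite [LHS](esumID [set y | exists u, y = m :: u]); last by move=> *; apply: a0.
  rewrite addeC; congr (_ + _).
    congr esum; apply/seteqP; split => y /=.
      move=> [[Py [i [u [ey hi]]]] hm]; subst y; split => //; exists i, u; split => //.
      rewrite ltnS leq_eqVlt in hi; case/orP: hi => // /eqP ei.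
      by exfalso; apply: hm; exists u; rewrite ei.
    move=> [Py [i [u [ey hi]]]]; subst y; split; first by split => //; exists i, u; split => //; apply: ltnW.
    by move=> [u' [ei _]]; move: hi; rewrite ei ltnn.
  rewrite -(esum_image _ (cons m)); last by move=> u v _ _ [].
  congr esum; apply/seteqP; split => y /=.
    by move=> [[Py _] [u' ey]]; subst y; exists u'.
  move=> [u Pu <-]; split; last by exists u.
  by split => //; exists m, u.
rewrite (esumID [set [::]]); last by move=> *; apply: a0.
congr (_ + _); rewrite -(H n); congr esum; apply/seteqP; split => y /=.
  move=> [Py ny]; case: y Py ny => [|i u] Py ny; first by exfalso; apply: ny.
  by split => //; exists i, u; split => //; apply: hn Py.
by move=> [Py [i [u [ey _]]]]; subst y; split.
Qed.

Definition DS (t : ptree) : \bar R := \esum_(y in Dn t) 1.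
Definition CS (t : ptree) (r : nat) : \bar R := \esum_(y in Cl t r) 1.

Lemma DS_eq cs : DS (PNode cs) =
  1 + \sum_(c <- cs) (if c.1.1 then DS c.2 else 0).
Proof.
rewrite /DS (@esum_addr _ _ (size cs)) //; last by move=> i u [].
rewrite (_ : _ `&` _ = [set [::]]); last first.
  by apply/seteqP; split => y /=; [case | move=> ->].
rewrite esum_set1 //; congr (_ + _).
rewrite (big_nth def); apply: eq_big_nat => i /andP[_ hi].
case: ifP => hd.
  congr esum; apply/seteqP; split => u /=; first by case.
  by move=> h; split.
by apply: esum1 => u /= [_ h _]; move: h; rewrite /chd /= hd.
Qed.

Lemma CS0 t : CS t 0 = DS t.
Proof. by []. Qed.

Lemma CS_eq c cs r : CS (PNode (c :: cs)) r.+1 = CS c.2 r +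
  (if Up c.2 r && c.1.2 then 1 + \sum_(c' <- cs) (if c'.1.1 then DS c'.2 else 0) else 0).
Proof.
rewrite /CS (@esum_addr _ _ (size cs).+1) //; last first.
  move=> i u /=; case: eqP => [->|_] //; by move=> [_ []].
rewrite big_nat_recl //=.
have -> : \esum_(u in [set u | Cl (PNode (c :: cs)) r.+1 (0%N :: u)]) (1 : \bar R) =
    \esum_(u in Cl c.2 r) 1 by [].
set b := Up c.2 r && c.1.2.
have E1 : Cl (PNode (c :: cs)) r.+1 `&` [set [::]] = if b then [set [::]] else set0.
  apply/seteqP; split => y /=.
    by move=> [h ey]; subst y; move: h; rewrite /b /chd /= => ->.
  by case: ifP => hb // ->; split.
have E2 i : [set u | Cl (PNode (c :: cs)) r.+1 (i.+1 :: u)] =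
    if b && (nth def cs i).1.1 then Dn (nth def cs i).2 else set0.
  apply/seteqP; split => u; rewrite /b /chd /=.
    by move=> [-> [hi -> hD]].
  case: ifP => // /andP[-> hd] hD; split => //; split => //.
  by rewrite /chd /= ltnS; apply: contraTT hd => /negbTE hs; rewrite nth_default // leqNgt hs.
rewrite E1.
under eq_bigr do rewrite E2.
rewrite (big_nth def).
clear E1 E2; case: b => /=.
  rewrite esum_set1 // addeCA; congr (_ + (_ + _)).
  by apply: eq_bigr => i _; case: ifP => //; rewrite esum_set0.
by rewrite esum_set0 add0e big1 ?adde0 ?add0e //.
Qed.

Lemma Ssize_CS t r : has0 t r -> Ssize R t (source r) = CS t r.
Proof. by move=> h; rewrite /Ssize cluster_Cl. Qed.

End Count.

Section Expect.
Variables (R : realType) (pk : nat -> R) (p q : R).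
Hypothesis pk_ge0 : forall k, (0 <= pk k)%R.
Hypothesis p01 : (0 <= p <= 1)%R.
Hypothesis q01 : (0 <= q <= 1)%R.
Local Open Scope ring_scope.
Local Open Scope ereal_scope.
Local Open Scope classical_set_scope.

Definition X := (bool * bool * ptree)%type.
Definition w d (c : X) : R := (ew p q c.1 * wt pk p q d c.2)%R.
Definition Ex d (F : ptree -> \bar R) := \esum_(t in [set: ptree]) (wt pk p q d t)%:E * F t.
Definition Mx d (G : X -> \bar R) := \esum_(c in [set: X]) (w d c)%:E * G c.
Definition Pw d (cs : seq X) : R := foldr (fun c acc => w d c * acc)%R 1%R cs.
Definition Jk (k : nat) := [set cs : seq X | size cs = k].
Definition Lx d k (H : seq X -> \bar R) := \esum_(cs in Jk k) (Pw d cs)%:E * H cs.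

Lemma ew_ge0 ab : (0 <= ew p q ab)%R.
Proof.
case/andP: p01 => p0 p1; case/andP: q01 => q0 q1.
by rewrite /ew; case: ab => [[] []] /=; apply: mulr_ge0; rewrite ?subr_ge0.
Qed.

Lemma wt_ge0 d t : (0 <= wt pk p q d t)%R.
Proof.
elim: d t => [|d IH] [cs] /=; first by case: eqP.
apply: mulr_ge0 => //; elim: cs => [|c cs IHc] //=.
by apply: mulr_ge0 => //; apply: mulr_ge0 => //; apply: ew_ge0.
Qed.

Lemma w_ge0 d c : (0 <= w d c)%R.
Proof. by apply: mulr_ge0; [apply: ew_ge0 | apply: wt_ge0]. Qed.

Lemma Pw_ge0 d cs : (0 <= Pw d cs)%R.
Proof. by elim: cs => [|c cs IH] //=; apply: mulr_ge0 => //; apply: w_ge0. Qed.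

Lemma esumZ (T : choiceType) (S : set T) (r : R) (a : T -> \bar R) :
  (0 <= r)%R -> (forall i, 0 <= a i) ->
  \esum_(i in S) (r%:E * a i) = r%:E * \esum_(i in S) a i.
Proof.
move=> r0 a0; rewrite /esum -ereal_supZl //; last first.
  apply/set0P; exists 0; exists set0; first exact: fsets_set0.
  by rewrite fsbig_set0.
congr ereal_sup; apply/seteqP; split => x /=.
  move=> [A hA <-]; exists (\sum_(i \in A) a i); first by exists A.
  by rewrite ge0_mule_fsumr.
by move=> [y [A hA <-] <-]; exists A => //; rewrite ge0_mule_fsumr.
Qed.

Lemma EZ (T : choiceType) (S : set T) (f : T -> R) (Y : \bar R) :
  (forall i, 0 <= f i)%R -> 0 <= Y ->
  \esum_(i in S) ((f i)%:E * Y) = (\esum_(i in S) (f i)%:E) * Y.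
Proof.
move=> f0 Y0; case: Y Y0 => [y| |] //= y0.
  rewrite muleC -esumZ; [|by [] | by move=> i; rewrite lee_fin].
  by apply: eq_esum => i _; rewrite muleC.
have [[i0 [Si0 fi0]]|nall] := pselect (exists i, S i /\ (0 < f i)%R).
  have h1 : (f i0)%:E <= \esum_(i in S) (f i)%:E.
    apply: esum_ge; exists [set i0]; last by rewrite fsbig_set1.
    by split; [exact: finite_set1 | move=> x ->].
  rewrite gt0_muley; last by apply: lt_le_trans h1; rewrite lte_fin.
  apply/eqP; rewrite eq_le leey /=.
  rewrite (le_trans _ (@esum_ge _ _ S (fun i => (f i)%:E * +oo) ((f i0)%:E * +oo) _)) //.
    by rewrite gt0_muley ?lte_fin.
  exists [set i0]; first by split; [exact: finite_set1 | move=> x ->].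
  by rewrite fsbig_set1.
have fz i : S i -> f i = 0%R.
  move=> Si; apply/eqP; rewrite eq_le f0 andbT leNgt; apply/negP => h.
  by apply: nall; exists i.
rewrite (@esum1 _ _ S (fun i => (f i)%:E)); last by move=> i /fz ->.
rewrite mul0e; apply: esum1 => i /fz ->; by rewrite mul0e.
Qed.

Lemma E0 (F : ptree -> \bar R) : (forall t, 0 <= F t) -> Ex 0 F = F (PNode [::]).
Proof.
move=> F0; rewrite /Ex.
rewrite (eq_esum (b := fun t => if t \in [set PNode [::]] then F t else 0)); last first.
  move=> [[|c cs]] _ /=; first by rewrite mem_set // mul1e.
  rewrite mul0e ifF //; apply/negbTE; apply/negP; rewrite inE; by [].
by rewrite -esum_mkcond esum_set1.
Qed.

Lemma E_succ d (F : ptree -> \bar R) : (forall t, 0 <= F t) ->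
  Ex d.+1 F = \esum_(k in [set: nat]) (pk k)%:E * Lx d k (fun cs => F (PNode cs)).
Proof.
move=> F0; rewrite /Ex (reindex_esum [set: seq X] [set: ptree] PNode); last first.
  by split => //; [move=> x y _ _ [] | move=> [cs] _; exists cs].
rewrite (reindex_esum ([set: nat] `*`` Jk) [set: seq X] snd); last first.
  split => //.
    by move=> [k1 c1] [k2 c2] /set_mem [_ h1] /set_mem [_ h2] /= e; rewrite /Jk /= in h1 h2; rewrite -h1 -h2 e.
  by move=> cs _; exists (size cs, cs).
rewrite -(esum_esum (a := fun k cs => (wt pk p q d.+1 (PNode cs))%:E * F (PNode cs))); last first.
  by move=> k cs _ _; apply: mule_ge0 => //; rewrite lee_fin; apply: wt_ge0.
apply: eq_esum => k _; rewrite /Lx -esumZ //; last first.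
  by move=> cs; apply: mule_ge0 => //; rewrite lee_fin; apply: Pw_ge0.
apply: eq_esum => cs hcs; rewrite /= -hcs muleA -EFinM; by [].
Qed.

Lemma L0 d H : 0 <= H [::] -> Lx d 0 H = H [::].
Proof.
move=> H0; rewrite /Lx (_ : Jk 0 = [set [::]]); last first.
  by apply/seteqP; split => cs /=; [move/size0nil | move=> ->].
by rewrite esum_set1 //= mul1e.
Qed.

Lemma Pw_cons d c cs : Pw d (c :: cs) = (w d c * Pw d cs)%R.
Proof. by []. Qed.

Lemma L_succ d k H : (forall cs, 0 <= H cs) ->
  Lx d k.+1 H = Mx d (fun c => Lx d k (fun cs => H (c :: cs))).
Proof.
move=> H0; rewrite /Mx /Lx.
transitivity (\esum_(c in [set: X]) \esum_(cs in Jk k) ((w d c)%:E * ((Pw d cs)%:E * H (c :: cs)))); last first.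
  apply: eq_esum => c _; rewrite esumZ ?w_ge0 //.
  by move=> cs; apply: mule_ge0 => //; rewrite lee_fin; apply: Pw_ge0.
rewrite (esum_esum (a := fun c cs => (w d c)%:E * ((Pw d cs)%:E * H (c :: cs)))); last first.
  move=> c cs _ _; apply: mule_ge0; first by rewrite lee_fin w_ge0.
  by apply: mule_ge0 => //; rewrite lee_fin Pw_ge0.
rewrite (reindex_esum ([set: X] `*`` (fun _ => Jk k)) (Jk k.+1) (fun x => x.1 :: x.2)).
  by apply: eq_esum => -[c cs] _; rewrite muleA -EFinM Pw_cons.
split.
- by move=> [c cs] [_ h]; rewrite /Jk /= h.
- by move=> [c1 cs1] [c2 cs2] _ _ /= [-> ->].
- move=> [|c cs] //= h; exists (c, cs) => //; split => //.
  by rewrite /Jk /= in h *; case: h.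
Qed.

Lemma esum_bb (g : bool * bool -> R) : (forall ab, 0 <= g ab)%R ->
  \esum_(ab in [set: bool * bool]) (g ab)%:E =
  (g (true, true) + g (true, false) + g (false, true) + g (false, false))%:E.
Proof.
move=> g0.
pose A1 := [set ab : bool * bool | ab.1]; pose A2 := [set ab : bool * bool | ab.2].
rewrite (esumID A1); last by move=> *; rewrite lee_fin.
rewrite (esumID A2 ([set: bool * bool] `&` A1)); last by move=> *; rewrite lee_fin.
rewrite (esumID A2 ([set: bool * bool] `&` ~` A1)); last by move=> *; rewrite lee_fin.
have e1 (S : set (bool * bool)) b : (forall x, S x <-> x = b) -> S = [set b].
  by move=> h; apply/seteqP; split => x /h.
rewrite (e1 ([set: bool * bool] `&` A1 `&` A2) (true, true)); last first.
  by move=> [[] []]; rewrite /A1 /A2 /=; split => // -[] [].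
rewrite (e1 ([set: bool * bool] `&` A1 `&` ~` A2) (true, false)); last first.
  by move=> [[] []]; rewrite /A1 /A2 /=; split => // -[] [].
rewrite (e1 ([set: bool * bool] `&` ~` A1 `&` A2) (false, true)); last first.
  by move=> [[] []]; rewrite /A1 /A2 /=; split => // -[] [].
rewrite (e1 ([set: bool * bool] `&` ~` A1 `&` ~` A2) (false, false)); last first.
  by move=> [[] []]; rewrite /A1 /A2 /=; split => // -[] [].
by rewrite !esum_set1 ?lee_fin // !EFinD addeA.
Qed.
Hypothesis pk_sum : \esum_(k in [set: nat]) (pk k)%:E = 1.

Definition sumf (f : bool * bool -> R) : R :=
  (ew p q (true, true) * f (true, true) + ew p q (true, false) * f (true, false) +
   ew p q (false, true) * f (false, true) + ew p q (false, false) * f (false, false))%R.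

Lemma M_sep d (f : bool * bool -> R) (F : ptree -> \bar R) :
  (forall ab, 0 <= f ab)%R -> (forall t, 0 <= F t) ->
  Mx d (fun c => (f c.1)%:E * F c.2) = (sumf f)%:E * Ex d F.
Proof.
move=> f0 F0; rewrite /Mx.
rewrite (_ : [set: X] = [set: bool * bool] `*`` (fun _ => [set: ptree])); last by apply/seteqP; split.
rewrite -(esum_esum (a := fun ab t => (w d (ab, t))%:E * ((f ab)%:E * F t))); last first.
  by move=> ab t _ _; apply: mule_ge0; rewrite ?lee_fin ?w_ge0 //; apply: mule_ge0; rewrite ?lee_fin.
transitivity (\esum_(ab in [set: bool * bool]) ((ew p q ab * f ab)%R%:E * Ex d F)).
  apply: eq_esum => ab _; rewrite /Ex -esumZ; last first.
  - by move=> t; apply: mule_ge0; rewrite ?lee_fin ?wt_ge0.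
  - by apply: mulr_ge0; [apply: ew_ge0 | apply: f0].
  apply: eq_esum => t _; rewrite /w /= !EFinM.
  by rewrite muleACA.
rewrite EZ; last first.
- by apply: esum_ge0 => t _; apply: mule_ge0; rewrite ?lee_fin ?wt_ge0.
- by move=> ab; apply: mulr_ge0; [apply: ew_ge0 | apply: f0].
by rewrite esum_bb // => ab; apply: mulr_ge0; [apply: ew_ge0 | apply: f0].
Qed.

Lemma sumf1 : sumf (fun _ => 1%R) = 1%R.
Proof. rewrite /sumf /ew /=; ring. Qed.

Lemma sumfp : sumf (fun ab => (ab.1)%:R) = p.
Proof. rewrite /sumf /ew /=; ring. Qed.

Lemma sumfq : sumf (fun ab => (ab.2)%:R) = q.
Proof. rewrite /sumf /ew /=; ring. Qed.

Lemma M_one_of d : Ex d (fun _ => 1) = 1 -> Mx d (fun _ => 1) = 1.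
Proof.
move=> E1.
have := M_sep d (f := fun _ => 1%R) (F := fun _ => 1) (fun _ => ler01) (fun _ => lee01).
rewrite sumf1 E1 => h.
transitivity (Mx d (fun c => (1%R)%:E * 1)); first by apply: eq_esum => c _; rewrite mule1.
by rewrite h mule1.
Qed.

Lemma L_one_of d : Ex d (fun _ => 1) = 1 -> forall k, Lx d k (fun _ => 1) = 1.
Proof.
move=> E1; elim => [|k IH]; first by rewrite L0.
by rewrite L_succ // IH M_one_of.
Qed.

Lemma E_one d : Ex d (fun _ => 1) = 1.
Proof.
elim: d => [|d IH]; first by rewrite E0.
rewrite E_succ //; under eq_esum do rewrite L_one_of // mule1.
exact: pk_sum.
Qed.

Lemma L_one d k : Lx d k (fun _ => 1) = 1.
Proof. exact: L_one_of (E_one d) k. Qed.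

Lemma M_one d : Mx d (fun _ => 1) = 1.
Proof. exact: M_one_of (E_one d). Qed.

Lemma L_const d k Y : 0 <= Y -> Lx d k (fun _ => Y) = Y.
Proof.
move=> Y0; rewrite /Lx EZ; [|by move=> cs; apply: Pw_ge0 | by []].
have h : \esum_(cs in Jk k) (Pw d cs)%:E = 1.
  by rewrite -(L_one d k); apply: eq_esum => cs _; rewrite mule1.
by rewrite h mul1e.
Qed.

Lemma M_const d Y : 0 <= Y -> Mx d (fun _ => Y) = Y.
Proof.
move=> Y0; rewrite /Mx EZ; [|by move=> cs; apply: w_ge0 | by []].
have h : \esum_(c in [set: X]) (w d c)%:E = 1.
  by rewrite -(M_one d); apply: eq_esum => cs _; rewrite mule1.
by rewrite h mul1e.
Qed.

Lemma L_add d k (H1 H2 : seq X -> \bar R) : (forall cs, 0 <= H1 cs) -> (forall cs, 0 <= H2 cs) ->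
  Lx d k (fun cs => H1 cs + H2 cs) = Lx d k H1 + Lx d k H2.
Proof.
move=> h1 h2; rewrite /Lx -esumD.
- by apply: eq_esum => cs _; rewrite ge0_muleDr.
- by move=> cs _; apply: mule_ge0; rewrite ?lee_fin ?Pw_ge0.
- by move=> cs _; apply: mule_ge0; rewrite ?lee_fin ?Pw_ge0.
Qed.

Lemma M_add d (H1 H2 : X -> \bar R) : (forall c, 0 <= H1 c) -> (forall c, 0 <= H2 c) ->
  Mx d (fun c => H1 c + H2 c) = Mx d H1 + Mx d H2.
Proof.
move=> h1 h2; rewrite /Mx -esumD.
- by apply: eq_esum => cs _; rewrite ge0_muleDr.
- by move=> cs _; apply: mule_ge0; rewrite ?lee_fin ?w_ge0.
- by move=> cs _; apply: mule_ge0; rewrite ?lee_fin ?w_ge0.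
Qed.

Lemma L_scale d k b (H : seq X -> \bar R) : (0 <= b)%R -> (forall cs, 0 <= H cs) ->
  Lx d k (fun cs => b%:E * H cs) = b%:E * Lx d k H.
Proof.
move=> b0 h; rewrite /Lx -esumZ //; last by move=> cs; apply: mule_ge0; rewrite ?lee_fin ?Pw_ge0.
by apply: eq_esum => cs _; rewrite muleCA.
Qed.

Lemma M_scale d b (H : X -> \bar R) : (0 <= b)%R -> (forall c, 0 <= H c) ->
  Mx d (fun c => b%:E * H c) = b%:E * Mx d H.
Proof.
move=> b0 h; rewrite /Mx -esumZ //; last by move=> cs; apply: mule_ge0; rewrite ?lee_fin ?w_ge0.
by apply: eq_esum => cs _; rewrite muleCA.
Qed.
Variable mu : R.
Hypothesis pk0 : pk 0 = 0%R.
Hypothesis pk_mu : \esum_(k in [set: nat]) (k%:R * pk k)%:E = mu%:E.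

Lemma eq_Lx d k H1 H2 : (forall cs, H1 cs = H2 cs) -> Lx d k H1 = Lx d k H2.
Proof. by move=> h; congr Lx; apply/funext. Qed.

Lemma eq_Mx d H1 H2 : (forall c, H1 c = H2 c) -> Mx d H1 = Mx d H2.
Proof. by move=> h; congr Mx; apply/funext. Qed.

Lemma eq_Ex d H1 H2 : (forall c, H1 c = H2 c) -> Ex d H1 = Ex d H2.
Proof. by move=> h; congr Ex; apply/funext. Qed.

Lemma Lx_ge0 d k H : (forall cs, 0 <= H cs) -> 0 <= Lx d k H.
Proof. by move=> h; apply: esum_ge0 => cs _; apply: mule_ge0; rewrite ?lee_fin ?Pw_ge0. Qed.

Lemma Mx_ge0 d H : (forall c, 0 <= H c) -> 0 <= Mx d H.
Proof. by move=> h; apply: esum_ge0 => cs _; apply: mule_ge0; rewrite ?lee_fin ?w_ge0. Qed.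

Lemma Ex_ge0 d H : (forall c, 0 <= H c) -> 0 <= Ex d H.
Proof. by move=> h; apply: esum_ge0 => cs _; apply: mule_ge0; rewrite ?lee_fin ?wt_ge0. Qed.

Lemma sum_ge0 (g : X -> \bar R) (cs : seq X) : (forall c, 0 <= g c) -> 0 <= \sum_(c <- cs) g c.
Proof. by move=> h; apply: sume_ge0 => c _; apply: h. Qed.

Lemma L_sum d k (g : X -> \bar R) : (forall c, 0 <= g c) ->
  Lx d k (fun cs => \sum_(c <- cs) g c) = (k%:R)%:E * Mx d g.
Proof.
move=> g0; elim: k => [|k IH].
  by rewrite L0 ?big_nil ?mul0e.
rewrite L_succ; last by move=> cs; apply: sum_ge0.
rewrite (@eq_Mx d _ (fun c => g c + (k%:R)%:E * Mx d g)); last first.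
  move=> c; rewrite (@eq_Lx d k _ (fun cs => g c + \sum_(c' <- cs) g c')); last first.
    by move=> cs; rewrite big_cons.
  by rewrite L_add ?L_const ?IH // => cs; apply: sum_ge0.
rewrite M_add //; last by move=> c; apply: mule_ge0; rewrite ?lee_fin ?Mx_ge0.
rewrite M_const; last by apply: mule_ge0; rewrite ?lee_fin ?Mx_ge0.
by rewrite -{1}(mul1e (Mx d g)) -ge0_muleDl ?lee_fin // -EFinD -natr1 addrC.
Qed.

Lemma pk_case (A B : nat -> \bar R) : (forall k, A k.+1 = B k.+1) ->
  forall k, (pk k)%:E * A k = (pk k)%:E * B k.
Proof. by move=> h [|k]; rewrite ?pk0 ?mul0e // h. Qed.

Lemma K1 (x y : \bar R) : 0 <= x -> 0 <= y ->
  \esum_(k in [set: nat]) (pk k)%:E * (x + (k%:R)%:E * y) = x + mu%:E * y.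
Proof.
move=> x0 y0.
under eq_esum do rewrite ge0_muleDr ?mule_ge0 ?lee_fin //.
rewrite esumD; last first.
- by move=> k _; apply: mule_ge0; rewrite ?lee_fin //; apply: mule_ge0; rewrite ?lee_fin.
- by move=> k _; apply: mule_ge0; rewrite ?lee_fin.
rewrite EZ // pk_sum mul1e; congr (_ + _).
under eq_esum do rewrite muleA -EFinM mulrC.
by rewrite EZ; [rewrite pk_mu | move=> k; apply: mulr_ge0 | ].
Qed.

Lemma Ssum : \esum_(k in [set: nat]) ((k.-1)%:R * pk k)%:E = (mu - 1)%:E.
Proof.
have h : \esum_(k in [set: nat]) ((k.-1)%:R * pk k)%:E + \esum_(k in [set: nat]) (pk k)%:E = mu%:E.
  rewrite -esumD; last first.
  - by move=> k _; rewrite lee_fin.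
  - by move=> k _; rewrite lee_fin mulr_ge0.
  rewrite -pk_mu; apply: eq_esum => -[|k] _; first by rewrite pk0 !mulr0 add0e.
  by rewrite -EFinD /= -{2}(mul1r (pk k.+1)) -mulrDl natr1.
move: h; rewrite pk_sum.
case: (\esum_(k in _) _) => [s| |] //= h.
by congr EFin; move: h => [<-]; rewrite addrK.
Qed.

Lemma K2 (x y : \bar R) : 0 <= x -> 0 <= y ->
  \esum_(k in [set: nat]) (pk k)%:E * (x + ((k.-1)%:R)%:E * y) = x + (mu - 1)%:E * y.
Proof.
move=> x0 y0.
under eq_esum do rewrite ge0_muleDr ?mule_ge0 ?lee_fin //.
rewrite esumD; last first.
- by move=> k _; apply: mule_ge0; rewrite ?lee_fin //; apply: mule_ge0; rewrite ?lee_fin.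
- by move=> k _; apply: mule_ge0; rewrite ?lee_fin.
rewrite EZ // pk_sum mul1e; congr (_ + _).
under eq_esum do rewrite muleA -EFinM mulrC.
by rewrite EZ; [rewrite Ssum | move=> k; apply: mulr_ge0 | ].
Qed.
Fixpoint aD (d : nat) : R := if d is d'.+1 then (1 + mu * p * aD d')%R else 1%R.

Fixpoint FF (d r : nat) : R :=
  if r is r'.+1 then (FF d.-1 r' + q ^+ r'.+1 * (1 + (mu - 1) * p * aD d.-1))%R else aD d.

Lemma DS_ge0 t : 0 <= DS R t.
Proof. by apply: esum_ge0. Qed.

Lemma CS_ge0 t r : 0 <= CS R t r.
Proof. by apply: esum_ge0. Qed.

Lemma g_ge0 (c : X) : 0 <= (if c.1.1 then DS R c.2 else 0).
Proof. by case: ifP => _; rewrite ?DS_ge0. Qed.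

Lemma ind_ge0 (b : bool) : 0 <= ((b%:R)%:E : \bar R).
Proof. by rewrite lee_fin ler0n. Qed.

Lemma Mg d : Ex d (DS R) = (aD d)%:E ->
  Mx d (fun c => if c.1.1 then DS R c.2 else 0) = (p * aD d)%:E.
Proof.
move=> h.
rewrite (@eq_Mx d _ (fun c => ((c.1.1)%:R)%:E * DS R c.2)); last first.
  by move=> [[[] b] t] /=; rewrite ?mul1e ?mul0e.
rewrite (@M_sep d (fun ab => (ab.1)%:R)); first by rewrite sumfp h EFinM.
- by move=> ab; apply: ler0n.
- by move=> t; apply: DS_ge0.
Qed.

Lemma EDS d : Ex d (DS R) = (aD d)%:E.
Proof.
elim: d => [|d IH].
  rewrite E0; last by move=> t; apply: DS_ge0.

  by rewrite DS_eq big_nil adde0.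
rewrite E_succ; last by move=> t; apply: DS_ge0.
rewrite (eq_esum (b := fun k => (pk k)%:E * (1 + (k%:R)%:E * (p * aD d)%:E))); last first.
  move=> k _; congr (_ * _).
  rewrite (@eq_Lx d k _ (fun cs => 1 + \sum_(c <- cs) (if c.1.1 then DS R c.2 else 0))); last first.
    by move=> cs; rewrite DS_eq.
  rewrite L_add; last by move=> cs; apply: sum_ge0 => c; apply: g_ge0.
    by rewrite L_const // L_sum ?Mg // => c; apply: g_ge0.
  by move=> _.
rewrite K1 //; last first.
  rewrite lee_fin; apply: mulr_ge0; first by case/andP: p01.
  by rewrite -lee_fin -IH; apply: Ex_ge0 => t; apply: DS_ge0.
by rewrite -EFinM -EFinD /= mulrA.
Qed.

Lemma aD_ge0 d : (0 <= aD d)%R.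
Proof. by rewrite -lee_fin -EDS; apply: Ex_ge0 => t; apply: DS_ge0. Qed.

Lemma EUp d r : (r <= d)%N -> Ex d (fun t => ((Up t r)%:R)%:E) = (q ^+ r)%:E.
Proof.
elim: r d => [|r IH] d hr.
  by rewrite (@eq_Ex d _ (fun _ => 1)) ?E_one ?expr0.
case: d hr => // d hr.
rewrite E_succ; last by move=> t; apply: ind_ge0.
rewrite (eq_esum (b := fun k => (pk k)%:E * (q ^+ r.+1)%:E)); last first.
  move=> k _; apply: (@pk_case (fun k => Lx d k (fun cs => ((Up (PNode cs) r.+1)%:R)%:E))
     (fun _ => (q ^+ r.+1)%:E)) => k' /=.
  rewrite L_succ; last by move=> cs; apply: ind_ge0.
  rewrite (@eq_Mx d _ (fun c => ((c.1.2)%:R)%:E * ((Up c.2 r)%:R)%:E)); last first.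
    move=> c; rewrite (@eq_Lx d k' _ (fun _ => ((c.1.2 && Up c.2 r)%:R)%:E)) //.
    rewrite L_const ?ind_ge0 //.
    by case: (c.1.2); case: (Up c.2 r); rewrite /= ?mul1e ?mul0e.
  rewrite (@M_sep d (fun ab => (ab.2)%:R) (fun t => ((Up t r)%:R)%:E)).
  - by rewrite sumfq IH // -EFinM exprS.
  - by move=> ab; apply: ler0n.
  - by move=> t; apply: ind_ge0.
rewrite EZ; last by rewrite lee_fin exprn_ge0 //; case/andP: q01.
  by rewrite pk_sum mul1e.
by [].
Qed.
Lemma FF_ge0_of d r : Ex d (fun t => CS R t r) = (FF d r)%:E -> (0 <= FF d r)%R.
Proof. by move=> h; rewrite -lee_fin -h; apply: Ex_ge0 => t; apply: CS_ge0. Qed.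

Lemma ECS d r : (r <= d)%N -> Ex d (fun t => CS R t r) = (FF d r)%:E.
Proof.
have p0 : (0 <= p)%R by case/andP: p01.
have q0 : (0 <= q)%R by case/andP: q01.
elim: r d => [|r IH] d hr.
  by rewrite (@eq_Ex d _ (DS R)) ?EDS.
case: d hr => // d hr.
have IHd := IH d hr.
have F0 := FF_ge0_of IHd.
have A0 := aD_ge0 d.
rewrite E_succ; last by move=> t; apply: CS_ge0.
pose x := (FF d r + q ^+ r.+1)%R.
pose y := (q ^+ r.+1 * (p * aD d))%R.
rewrite (eq_esum (b := fun k => (pk k)%:E * (x%:E + ((k.-1)%:R)%:E * y%:E))); last first.
  move=> k _; apply: (@pk_case (fun k => Lx d k (fun cs => CS R (PNode cs) r.+1))
     (fun k => x%:E + ((k.-1)%:R)%:E * y%:E)) => k' /=.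
  rewrite L_succ; last by move=> cs; apply: CS_ge0.
  pose K := (1 + k'%:R * (p * aD d))%R.
  rewrite (@eq_Mx d _ (fun c => CS R c.2 r + K%:E * ((Up c.2 r && c.1.2)%:R)%:E)); last first.
    move=> c.
    rewrite (@eq_Lx d k' _ (fun cs => CS R c.2 r + ((Up c.2 r && c.1.2)%:R)%:E *
        (1 + \sum_(c' <- cs) (if c'.1.1 then DS R c'.2 else 0)))); last first.
      move=> cs; rewrite CS_eq; case: (Up c.2 r && c.1.2); rewrite /= ?mul1e ?mul0e //.
    rewrite L_add; first last.
    - by move=> cs; apply: mule_ge0; rewrite ?ind_ge0 //; apply: adde_ge0 => //; apply: sum_ge0 => c'; apply: g_ge0.
    - by move=> cs; apply: CS_ge0.
    rewrite L_const ?CS_ge0 // L_scale ?ler0n //; last first.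
      by move=> cs; apply: adde_ge0 => //; apply: sum_ge0 => c'; apply: g_ge0.
    rewrite L_add //; last by move=> cs; apply: sum_ge0 => c'; apply: g_ge0.
    rewrite L_const // L_sum; last by move=> c'; apply: g_ge0.
    rewrite Mg; last exact: EDS.
    by rewrite muleC /K EFinD EFinM.
  rewrite M_add; first last.
  - by move=> c; apply: mule_ge0; rewrite ?ind_ge0 // lee_fin /K addr_ge0 // mulr_ge0 // mulr_ge0.
  - by move=> c; apply: CS_ge0.
  rewrite M_scale; first last.
  - by move=> c; apply: ind_ge0.
  - by rewrite /K addr_ge0 // mulr_ge0 // mulr_ge0.
  rewrite (@eq_Mx d _ (fun c => ((fun _ : bool * bool => 1%R) c.1)%:E * (fun t => CS R t r) c.2)); last first.
    by move=> c /=; rewrite mul1e.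
  rewrite (@M_sep d (fun _ : bool * bool => 1%R) (fun t => CS R t r)); first last.
  - by move=> t; apply: CS_ge0.
  - by move=> ab; apply: ler01.
  rewrite sumf1 mul1e IHd.
  rewrite (@eq_Mx d _ (fun c => ((fun ab : bool * bool => ((ab.2)%:R : R)) c.1)%:E * (fun t => ((Up t r)%:R)%:E) c.2)); last first.
    by move=> [[a b] t] /=; case: b; case: (Up t r); rewrite /= ?mul1e ?mul0e.
  rewrite (@M_sep d (fun ab : bool * bool => ((ab.2)%:R : R)) (fun t => ((Up t r)%:R)%:E)); first last.
  - by move=> t; apply: ind_ge0.
  - by move=> ab; apply: ler0n.
  rewrite sumfq EUp // -!EFinM -!EFinD; congr EFin.
  by rewrite /x /y /K exprS; ring.
rewrite K2; first last.
- by rewrite lee_fin /y mulr_ge0 // ?exprn_ge0 // mulr_ge0.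
- by rewrite lee_fin /x addr_ge0 // exprn_ge0.
by rewrite -!EFinM -!EFinD /x /y /=; congr EFin; ring.
Qed.
Lemma wt_has0 d t r : wt pk p q d t != 0%R -> (r <= d)%N -> has0 t r.
Proof.
elim: r d t => [|r IH] d [cs] //; case: d => // d.
rewrite /= => hw hr; case: cs hw => [|c cs] /=; first by rewrite pk0 mul0r eqxx.
rewrite /chd /= => hw; apply: (IH d) => //.
apply: contraNneq hw => h0; by rewrite h0 mulr0 mul0r mulr0.
Qed.

Lemma ES_Ex Rt r : (r <= Rt)%N -> ES pk p q Rt r = Ex Rt (fun t => CS R t r).
Proof.
move=> hr; rewrite /ES /Ex; apply: eq_esum => t _.
have [->|hw] := eqVneq (wt pk p q Rt t) 0%R; first by rewrite !mul0e.
by rewrite Ssize_CS // (wt_has0 hw hr).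
Qed.
End Expect.

Section Closed.
Variables (R : realType) (p q mu : R).
Local Open Scope ring_scope.
Hypothesis hmp : mu * p != 1.
Hypothesis hmpq : mu * p * q != 1.
Hypothesis hq : q != 1.

Definition phi (Rt r : nat) : R :=
  (1 - mu * p)^-1 *
    (1 + q * ((1 - q ^+ r) / (1 - q)) * (1 - p)
       - (mu * p) ^+ (Rt - r).+1
         * ((1 - p * q * (1 + (mu - 1) * (mu * p * q) ^+ r)) / (1 - mu * p * q))).

Lemma aD_closed d : aD p mu d = (1 - (mu * p) ^+ d.+1) / (1 - mu * p).
Proof.
have h1 : 1 - mu * p != 0 by rewrite subr_eq0 eq_sym.
elim: d => [|d IH] /=; first by rewrite expr1 divff.
rewrite IH !exprS; field; exact: h1.
Qed.

Lemma FF_closed d r : (r <= d)%N -> FF p q mu d r = phi d r.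
Proof.
have h1 : 1 - mu * p != 0 by rewrite subr_eq0 eq_sym.
have h2 : 1 - mu * p * q != 0 by rewrite subr_eq0 eq_sym.
have h3 : 1 - q != 0 by rewrite subr_eq0 eq_sym.
elim: r d => [|r IH] d hr.
  rewrite /= aD_closed /phi subn0 !expr0.
  rewrite (_ : 1 - p * q * (1 + (mu - 1) * 1) = 1 - mu * p * q); last by ring.
  by field; rewrite ?h1 ?h2 ?h3.
case: d hr => // d hr.
rewrite /= IH // aD_closed /phi subSS.
have [n ->] : exists n, d = (n + r)%N by exists (d - r)%N; rewrite subnK.
rewrite addnK.
set A := (mu * p) ^+ n.+1.
have eA : (mu * p) ^+ (n + r).+1 = A * (mu * p) ^+ r by rewrite /A -exprD addSn.
rewrite eA (exprS q) (exprS (mu * p * q)) exprMn.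
by field; rewrite ?h1 ?h2 ?h3.
Qed.
End Closed.


Unset Implicit Arguments.
Local Open Scope ring_scope.

Theorem theorem1 (R : realType) (pk : nat -> R) (mu p q : R) (r Rt : nat) :
  (forall k, 0 <= pk k) ->
  (\esum_(k in [set: nat]) (pk k)%:E = 1%E) ->
  pk 0%N = 0 ->
  (\esum_(k in [set: nat]) (k%:R * pk k)%:E = mu%:E) ->
  0 < p < 1 -> 0 < q < 1 ->
  (r <= Rt)%N ->
  mu * p != 1 -> mu * p * q != 1 ->
  ES pk p q Rt r =
  ((1 - mu * p)^-1 *
    (1 + q * ((1 - q ^+ r) / (1 - q)) * (1 - p)
       - (mu * p) ^+ (Rt - r).+1
         * ((1 - p * q * (1 + (mu - 1) * (mu * p * q) ^+ r)) / (1 - mu * p * q))))%:E.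
Proof.
move=> hpk hsum hpk0 hmu /andP[p0 p1] /andP[q0 q1] hr hmp hmpq.
have p01 : 0 <= p <= 1 by rewrite (ltW p0) (ltW p1).
have q01 : 0 <= q <= 1 by rewrite (ltW q0) (ltW q1).
rewrite (ES_Ex p q hpk0 hr) (ECS hpk p01 q01 hsum hpk0 hmu hr).
by rewrite (FF_closed hmp hmpq) // lt_eqF.
Qed.
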